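(* Consider the three-mass system in $\mathbb{R}^2$ described in the context, reduced by $x$-translation symmetry to a vector field on $TQ/\mathbb{R}$. Let $\hat q_*\in Q/\mathbb{R}$ be a non-degenerate minimum of the reduced potential $\hat U$, i.e. $\mathrm{d}\hat U(\hat q_* )=0$ and the Hessian $\hat K$ of $\hat U$ at $\hat q_*$ is positive definite, and suppose the total Rayleigh dissipation function $R$ is positive definite on the fiber of $TQ/\mathbb{R}$ above $\hat q_*$. Then $(\hat q_*,0)\in TQ/\mathbb{R}$ is a robustly stable equilibrium of the reduced system.
   Context: Three unit masses $q_i=(x_i,z_i)\in\mathbb{R}^2$, $Q=\{q\in\mathbb{R}^6:q_i\neq q_j\}$, $\ell_k=\|q_i-q_j\|$ for $\{i,j,k\}=\{1,2,3\}$, $\chi(s)=\tfrac12 s^2$ for $s<0$ and $0$ otherwise (tacitly smoothed near $0$). Equations of motion: $\ddot q=F(q,\dot q)-\mathrm{d}U(q)$ with $U=\frac{\kappa_s}{2}\sum_k(\ell_k-\bar\ell_k)^2+\kappa_{\mathrm{np}}\sum_i\chi(z_i)+\sum_i z_i$ and $F=-\partial R/\partial\dot q$, where $R=\frac{\nu_s}{2}\sum_k\dot\ell_k^2-\frac{\nu_{\mathrm{ns}}}{2}\sum_i\chi'(z_i)\dot x_i^2+\frac{\nu_{\mathrm{db}}}{2}\sum_i\chi(z_i)\dot z_i^2$, all constants positive. Everything is invariant under the free proper action of $(\mathbb{R},+)$ translating all $x_i$ (trivially on velocities), giving reduced potential $\hat U$ with $U=\hat U\circ\pi$ and a reduced vector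 field on $TQ/\mathbb{R}$. An equilibrium $x_*$ of $\dot x=f(x)$ is robustly stable if $f(x_* )=0$ and the spectrum of $Df(x_* )$ lies strictly in the open left half-plane. *)

(* Defs.v *)
From HB Require Import structures.
From mathcomp Require Import all_boot all_order all_algebra.
From mathcomp Require Import all_classical all_reals all_analysis.
From mathcomp Require Import complex.
Set Implicit Arguments. Unset Strict Implicit. Unset Printing Implicit Defensive.
Import Order.TTheory GRing.Theory Num.Theory.
Import numFieldNormedType.Exports.
Local Open Scope ring_scope.

Section ThreeMass.
Variable R : realType.

Definition ebasis (n : nat) (a : 'I_n) : 'rV[R]_n := delta_mx 0 a.

(* A configuration q in R^6 is (x_1,z_1,x_2,z_2,x_3,z_3); masses indexed by 'I_3. *)
Definition xi (i : 'I_3) : 'I_6 := inord (2 * i).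
Definition zi (i : 'I_3) : 'I_6 := inord (2 * i + 1).
Definition xc (q : 'rV[R]_6) (i : 'I_3) : R := q 0 (xi i).
Definition zc (q : 'rV[R]_6) (i : 'I_3) : R := q 0 (zi i).

Definition inQ (q : 'rV[R]_6) : Prop :=
  forall i j : 'I_3, i != j -> (xc q i, zc q i) != (xc q j, zc q j).

(* For k, the two other indices {i,j} = {1,2,3} \ {k}. *)
Definition oth1 (k : 'I_3) : 'I_3 := inord ((k + 1) %% 3).
Definition oth2 (k : 'I_3) : 'I_3 := inord ((k + 2) %% 3).

Definition len (q : 'rV[R]_6) (k : 'I_3) : R :=
  Num.sqrt ((xc q (oth1 k) - xc q (oth2 k)) ^+ 2 + (zc q (oth1 k) - zc q (oth2 k)) ^+ 2).

Definition chi0 (s : R) : R := if s < 0 then s ^+ 2 / 2 else 0.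

Definition smoothing_of_chi0 (chi : R -> R) : Prop :=
  (forall (n : nat) (s : R), derivable (derive1n n chi) s 1) /\
  exists eps : R, 0 < eps /\ forall s : R, eps <= `|s| -> chi s = chi0 s.

Definition Upot (ks kn : R) (lbar : 'I_3 -> R) (chi : R -> R) (q : 'rV[R]_6) : R :=
  ks / 2 * \sum_(k < 3) (len q k - lbar k) ^+ 2
  + kn * \sum_(i < 3) chi (zc q i) + \sum_(i < 3) zc q i.

Definition Rayleigh (nus nuns nudb : R) (chi : R -> R) (q qd : 'rV[R]_6) : R :=
  nus / 2 * \sum_(k < 3) ('D_qd (fun p => len p k) q) ^+ 2
  - nuns / 2 * \sum_(i < 3) (derive1 chi (zc q i)) * (xc qd i) ^+ 2
  + nudb / 2 * \sum_(i < 3) chi (zc q i) * (zc qd i) ^+ 2.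

Definition Fdiss (nus nuns nudb : R) (chi : R -> R) (q qd : 'rV[R]_6) : 'rV[R]_6 :=
  \row_(a < 6) - 'D_(ebasis a) (Rayleigh nus nuns nudb chi q) qd.
Definition dU (ks kn : R) (lbar : 'I_3 -> R) (chi : R -> R) (q : 'rV[R]_6) : 'rV[R]_6 :=
  \row_(a < 6) 'D_(ebasis a) (Upot ks kn lbar chi) q.

(* Coordinates on Q/R: y = (x_2 - x_1, x_3 - x_1, z_1, z_2, z_3).
   projQ : Q -> Q/R, and liftQ : Q/R -> Q the section with x_1 = 0. *)
Definition projQ (q : 'rV[R]_6) : 'rV[R]_5 :=
  \row_(b < 5) [:: xc q 1 - xc q 0; xc q 2%:R - xc q 0; zc q 0; zc q 1; zc q 2%:R]`_b.
Definition liftQ (y : 'rV[R]_5) : 'rV[R]_6 :=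
  \row_(a < 6) [:: 0; y 0 (inord 2); y 0 (inord 0); y 0 (inord 3); y 0 (inord 1); y 0 (inord 4)]`_a.

(* Reduced potential Uhat, U = Uhat o projQ. *)
Definition Uhat (ks kn : R) (lbar : 'I_3 -> R) (chi : R -> R) (y : 'rV[R]_5) : R :=
  Upot ks kn lbar chi (liftQ y).

(* TQ/R = (Q/R) x R^6 (the action is trivial on velocities); a state is
   row_mx y v with y in Q/R-coordinates and v in R^6.  The reduced vector
   field is the push-forward of (qdot, qddot) = (v, F(q,v) - dU(q)). *)
Definition fred (ks kn nus nuns nudb : R) (lbar : 'I_3 -> R) (chi : R -> R)
    (X : 'rV[R]_(5 + 6)) : 'rV[R]_(5 + 6) :=
  let y := lsubmx X in let v := rsubmx X in
  row_mx ('D_v projQ (liftQ y))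
         (Fdiss nus nuns nudb chi (liftQ y) v - dU ks kn lbar chi (liftQ y)).

Definition hessian (n : nat) (g : 'rV[R]_n -> R) (x : 'rV[R]_n) : 'M[R]_n :=
  \matrix_(i < n, j < n) 'D_(ebasis i) (fun y => 'D_(ebasis j) g y) x.

Definition posdef_mx (n : nat) (K : 'M[R]_n) : Prop :=
  forall w : 'rV[R]_n, w != 0 -> 0 < (w *m K *m w^T) 0 0.

(* Robust stability of an equilibrium of xdot = f(x). The matrix of Df(x)
   (acting on row vectors) is lin1_mx ('d f x); its spectrum is the set of
   complex eigenvalues. *)
Definition robustly_stable (n : nat) (f : 'rV[R]_n -> 'rV[R]_n) (x : 'rV[R]_n) : Prop :=
  f x = 0 /\ differentiable f x /\
  forall lam : R[i],
    eigenvalue (map_mx (fun r : R => (r%:C)%C) (lin1_mx ('d f x))) lam -> complex.Re lam < 0.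

End ThreeMass.
Arguments ebasis {R n} a.

(* Main.v *)
Require Import Defs.
From HB Require Import structures.
From mathcomp Require Import all_boot all_order all_algebra.
From mathcomp Require Import all_classical all_reals all_analysis.
From mathcomp Require Import complex.
From mathcomp Require Import ring lra.
Import Order.TTheory GRing.Theory Num.Theory.
Import numFieldNormedType.Exports.
Local Open Scope ring_scope.
Set Implicit Arguments. Unset Strict Implicit. Unset Printing Implicit Defensive.

Section Gen.
Variable R : realType.

Lemma isdD (V : normedModType R) (f g df dg : V -> R) x :
  is_diff x f df -> is_diff x g dg ->
  is_diff x (fun y => f y + g y) (fun v => df v + dg v).
Proof. move=> ? ?; exact: (is_diffD _ _). Qed.

Lemma isdB (V : normedModType R) (f g df dg : V -> R) x :
  is_diff x f df -> is_diff x g dg ->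
  is_diff x (fun y => f y - g y) (fun v => df v - dg v).
Proof. move=> ? ?; exact: (is_diffB _ _). Qed.

Lemma isdN (V : normedModType R) (f df : V -> R) x :
  is_diff x f df -> is_diff x (fun y => - f y) (fun v => - df v).
Proof. move=> ?; exact: (is_diffN _). Qed.

Lemma isdM (V : normedModType R) (f g df dg : V -> R) x :
  is_diff x f df -> is_diff x g dg ->
  is_diff x (fun y => f y * g y) (fun v => f x * dg v + g x * df v).
Proof. move=> ? ?; exact: (is_diffM _ _). Qed.

Lemma isdcst (V : normedModType R) (a : R) (x : V) :
  is_diff x (fun _ => a) (fun _ => 0).
Proof. exact: is_diff_cst. Qed.

Lemma isdsum (V : normedModType R) n (f df : 'I_n -> V -> R) x :
  (forall i, is_diff x (f i) (df i)) ->
  is_diff x (fun y => \sum_(i < n) f i y) (fun v => \sum_(i < n) df i v).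
Proof.
move=> H.
have -> : (fun y => \sum_(i < n) f i y) = \sum_(i < n) f i.
  by apply/funext => y; rewrite fct_sumE.
have -> : (fun v => \sum_(i < n) df i v) = \sum_(i < n) df i.
  by apply/funext => y; rewrite fct_sumE.
elim/big_rec2 : _ => [|i y1 y2 _ IH]; first exact: is_diff_cst.
exact: is_diffD.
Qed.


Definition lin n (f : 'rV[R]_n -> R) := forall a w1 w2, f (a *: w1 + w2) = a * f w1 + f w2.
Lemma lin_add n (f g : 'rV[R]_n -> R) : lin f -> lin g -> lin (fun w => f w + g w).
Proof. move=> F G a w1 w2; rewrite F G; ring. Qed.
Lemma lin_sub n (f g : 'rV[R]_n -> R) : lin f -> lin g -> lin (fun w => f w - g w).
Proof. move=> F G a w1 w2; rewrite F G; ring. Qed.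
Lemma lin_cmul n c (f : 'rV[R]_n -> R) : lin f -> lin (fun w => c * f w).
Proof. move=> F a w1 w2; rewrite F; ring. Qed.
Lemma lin_sum n m (F : 'I_m -> 'rV[R]_n -> R) : (forall k, lin (F k)) -> lin (fun w => \sum_(k < m) F k w).
Proof. move=> HF a w1 w2; rewrite mulr_sumr -big_split; apply: eq_bigr => k _; exact: HF. Qed.

End Gen.


Section Gen2.
Variable R : realType.

Lemma isdZl (V W : normedModType R) (k dk : V -> R) (c : W) x :
  is_diff x k dk -> is_diff x (fun y => k y *: c) (fun v => dk v *: c).
Proof.
move=> [dk1 dk2]; apply: DiffDef; first exact: differentiableZl.
by rewrite diffZl // dk2.
Qed.

Lemma isd_derive (V W : normedModType R) (f df : V -> W) x v :
  is_diff x f df -> 'D_v f x = df v.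
Proof. by move=> [d1 d2]; rewrite deriveE // d2. Qed.

Lemma isd_coord m n (i : 'I_m) (j : 'I_n) (x : 'M[R]_(m, n)) :
  is_diff x (fun X : 'M[R]_(m, n) => X i j) (fun v => v i j).
Proof.
have @f : {linear 'M[R]_(m, n) -> R}.
  by exists (fun N : 'M[R]_(_, _) => N i j); do 2![eexists]; do ?[constructor];
     rewrite ?mxE// => ? *; rewrite ?mxE//; move=> ?; rewrite !mxE.
rewrite (_ : (fun _ => _) = f) //; apply: DiffDef.
  exact/linear_differentiable/coord_continuous.
by rewrite diff_lin //; exact: coord_continuous.
Qed.

Lemma isd_comp (U V W : normedModType R) (f df : U -> V) (g dg : V -> W) x :
  is_diff x f df -> is_diff (f x) g dg ->
  is_diff x (fun y => g (f y)) (fun v => dg (df v)).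
Proof. move=> ? ?; exact: (is_diff_comp _ _). Qed.

Lemma isd_comp1 (V : normedModType R) (g : R -> R) (f df : V -> R) x :
  is_diff x f df -> derivable g (f x) 1 ->
  is_diff x (fun y => g (f y)) (fun v => derive1 g (f x) * df v).
Proof.
move=> Hf Hg.
have Hg' : is_diff (f x) g (fun h => h *: derive1 g (f x)).
  apply: DiffDef; first exact/derivable1_diffP.
  by rewrite deriv1E.
have H := isd_comp Hf Hg'.
have -> : (fun v => derive1 g (f x) * df v) = (fun v => df v *: derive1 g (f x)).
  by apply/funext => v; rewrite mulrC.
exact: H.
Qed.

Lemma isdV (V : normedModType R) (f df : V -> R) x :
  is_diff x f df -> f x != 0 ->
  is_diff x (fun y => (f y)^-1) (fun v => - (f x) ^- 2 * df v).
Proof.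
move=> [d1 d2] fx0; apply: DiffDef; first exact: differentiableV.
by rewrite diffV // d2.
Qed.

Lemma is_diff_row (V : normedModType R) n (F : V -> 'rV[R]_n) (dF : 'I_n -> V -> R) x :
  (forall j, is_diff x (fun y => F y 0 j) (dF j)) ->
  is_diff x F (fun v => \row_j dF j v).
Proof.
move=> H.
have -> : F = (fun y => \sum_(j < n) (fun z => F z 0 j *: (delta_mx 0 j : 'rV[R]_n)) y).
  by apply/funext => y; rewrite {1}[F y]row_sum_delta.
have -> : (fun v => \row_j dF j v) = (fun v => \sum_(j < n) (fun z => dF j z *: (delta_mx 0 j : 'rV[R]_n)) v).
  by apply/funext => y; rewrite {1}[\row_j _]row_sum_delta; apply: eq_bigr => j _; rewrite mxE.
have E1 : (fun y => \sum_(j < n) (fun z => F z 0 j *: (delta_mx 0 j : 'rV[R]_n)) y) =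
   \sum_(j < n) (fun z => F z 0 j *: (delta_mx 0 j : 'rV[R]_n)).
  by apply/funext => y; rewrite fct_sumE.
have E2 : (fun y => \sum_(j < n) (fun z => dF j z *: (delta_mx 0 j : 'rV[R]_n)) y) =
   \sum_(j < n) (fun z => dF j z *: (delta_mx 0 j : 'rV[R]_n)).
  by apply/funext => y; rewrite fct_sumE.
rewrite E1 E2.
elim/big_rec2 : _ => [|i y1 y2 _ IH]; first exact: is_diff_cst.
apply: is_diffD => //; exact: isdZl.
Qed.

Lemma near_eq_is_diff (V W : normedModType R) (f g dg : V -> W) x :
  (\forall y \near x, f y = g y) -> is_diff x g dg -> is_diff x f dg.
Proof.
move=> fg [dgx dgv].
have fxgx : f x = g x by exact: (nbhs_singleton fg).
have key : f \o shift x = cst (f x) + 'd g x +o_ 0 id.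
  apply/eqaddoP => e e0.
  have /diff_locally /eqaddoP := dgx => /(_ e e0) Hg.
  have fg0 : \forall h \near 0, f (h + x) = g (h + x).
    move: fg; rewrite (near_shift 0 x).
    by apply: filterS => h; rewrite /= subr0.
  move: Hg fg0; apply: filterS2 => h H1 H2.
  by move: H1; rewrite !fctE /= fxgx H2.
have dfe : 'd f x = 'd g x :> (V -> W).
  exact: (diff_unique (diff_continuous dgx) key).
apply: DiffDef; last by rewrite dfe.
apply/diff_locallyP; rewrite dfe; split => //; exact: diff_continuous.
Qed.

End Gen2.

Lemma isd_ext (R : realType) (V W : normedModType R) (f g : V -> W) dg x :
  (forall y, f y = g y) -> is_diff x g dg -> is_diff x f dg.
Proof. by move=> fg; have -> : f = g by apply/funext. Qed.

Section Gen3.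
Local Open Scope classical_set_scope.
Variable R : realType.

Lemma DLcomp (U V W : normedModType R) (l : U -> V) (f : V -> W) (x v : U) :
  (forall (h : R) (v x : U), l (h *: v + x) = h *: l v + l x) ->
  'D_v (fun y => f (l y)) x = 'D_(l v) f (l x).
Proof.
move=> hl; rewrite /derive; congr lim.
have -> : (fun h : R => h^-1 *: (f (l (h *: v + x)) - f (l x))) =
          (fun h : R => h^-1 *: (f (h *: l v + l x) - f (l x))).
  by apply/funext => h; rewrite hl.
by [].
Qed.

Lemma derive_aff (V W : normedModType R) (f : V -> W) (a v : V) (c : W) :
  (forall h : R, f (h *: v + a) = h *: c + f a) -> 'D_v f a = c.
Proof.
move=> hf; rewrite /derive; apply: cvg_lim => //.
apply/cvgrPdist_le => e e0; near=> h.
rewrite /= hf addrK scalerA mulVf ?scale1r ?subrr ?normr0 ?ltW //.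
near: h; exact: nbhs_dnbhs_neq.
Unshelve. all: by end_near. Qed.

Lemma lin_sumZ n m (f : 'rV[R]_n -> R) (c : 'I_m -> R) (x : 'I_m -> 'rV[R]_n) :
  lin f -> f (\sum_(i < m) c i *: x i) = \sum_(i < m) c i * f (x i).
Proof.
move=> hf; have f0 : f 0 = 0.
  have := hf (-1) 0 0; rewrite scaler0 addr0 => ->; ring.
elim/big_rec2 : _ => // i y1 y2 _ <-; exact: hf.
Qed.

Lemma lin_basis n (f : 'rV[R]_n -> R) (v : 'rV[R]_n) :
  lin f -> f v = \sum_(a < n) v 0 a * f (ebasis a).
Proof. by move=> hf; rewrite {1}[v]row_sum_delta lin_sumZ. Qed.

End Gen3.

Section Gen4.
Variable R : realType.
Lemma isd_comp' (U V W : normedModType R) (f df : U -> V) (g dg : V -> W) x y :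
  is_diff x f df -> f x = y -> is_diff y g dg ->
  is_diff x (fun z => g (f z)) (fun v => dg (df v)).
Proof. by move=> H1 <- H2; exact: isd_comp. Qed.

Lemma isdM0 (V : normedModType R) (a b da db : V -> R) x :
  is_diff x a da -> is_diff x b db -> b x = 0 ->
  is_diff x (fun y => a y * b y) (fun v => a x * db v).
Proof.
move=> ha hb b0; have H := isdM ha hb.
have E : (fun v => a x * db v + b x * da v) = (fun v => a x * db v).
  by apply/funext => v; rewrite b0 mul0r addr0.
by rewrite E in H.
Qed.

Lemma isdM0' (V : normedModType R) (a b da db : V -> R) x :
  is_diff x a da -> is_diff x b db -> b x = 0 ->
  is_diff x (fun y => b y * a y) (fun v => db v * a x).
Proof.
move=> ha hb b0; have H := isdM hb ha.
have E : (fun v => b x * da v + a x * db v) = (fun v => db v * a x).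
  by apply/funext => v; rewrite b0 mul0r add0r mulrC.
by rewrite E in H.
Qed.

Lemma isd_entry (V : normedModType R) m (F dF : V -> 'rV[R]_m) x j :
  is_diff x F dF -> is_diff x (fun y => F y 0 j) (fun v => dF v 0 j).
Proof. move=> h; exact: isd_comp h (isd_coord 0 j (F x)). Qed.
End Gen4.

Section Gen5.
Variable R : realType.
Lemma entB m n (A B : 'M[R]_(m, n)) i j : (A - B) i j = A i j - B i j.
Proof. by rewrite !mxE. Qed.
Lemma entD m n (A B : 'M[R]_(m, n)) i j : (A + B) i j = A i j + B i j.
Proof. by rewrite !mxE. Qed.
Lemma entZ m n (c : R) (A : 'M[R]_(m, n)) i j : (c *: A) i j = c * A i j.
Proof. by rewrite !mxE. Qed.
Lemma lin_lin2 n (f : 'rV[R]_n -> R) a b x y : lin f -> f (a *: x - b *: y) = a * f x - b * f y.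
Proof.
move=> hf; have e : f 0 = 0 by have := hf (-1) 0 0; rewrite scaler0 addr0 mulN1r addNr.
rewrite (_ : a *: x - b *: y = a *: x + (-b) *: y); last by rewrite scaleNr.
rewrite hf (_ : (-b) *: y = (-b) *: y + 0); last by rewrite addr0.
rewrite hf e; ring.
Qed.
Lemma lin_lin2p n (f : 'rV[R]_n -> R) a b x y : lin f -> f (a *: x + b *: y) = a * f x + b * f y.
Proof.
move=> hf; have e : f 0 = 0 by have := hf (-1) 0 0; rewrite scaler0 addr0 mulN1r addNr.
rewrite hf (_ : b *: y = b *: y + 0); last by rewrite addr0.
rewrite hf e; ring.
Qed.
Definition ip n (w z : 'rV[R]_n) := \sum_(a < n) w 0 a * z 0 a.
Lemma ipC n (w z : 'rV[R]_n) : ip w z = ip z w.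
Proof. by apply: eq_bigr => a _; rewrite mulrC. Qed.
Lemma ip_ge0 n (w : 'rV[R]_n) : 0 <= ip w w.
Proof. by apply: sumr_ge0 => a _; rewrite -expr2 sqr_ge0. Qed.
Lemma ip_e n (w : 'rV[R]_n) a : ip w (ebasis a) = w 0 a.
Proof.
rewrite /ip (bigD1 a) //= big1 ?addr0; first by rewrite /ebasis mxE !eqxx mulr1.
by move=> b ba; rewrite /ebasis mxE (negbTE ba) andbF mulr0.
Qed.
Lemma ip_lin n (w : 'rV[R]_n) : lin (ip w).
Proof. move=> a z1 z2; rewrite /ip mulr_sumr -big_split; apply: eq_bigr => b _; rewrite !mxE /=; ring. Qed.
End Gen5.


Section Idx.
Variable R : realType.
Definition dX k (q : 'rV[R]_6) := xc q (oth1 k) - xc q (oth2 k).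
Definition dZ k (q : 'rV[R]_6) := zc q (oth1 k) - zc q (oth2 k).

Lemma xiE (i : 'I_3) : nat_of_ord (xi i) = (2 * i)%N.
Proof. by rewrite /xi inordK //; case: i => [[|[|[|]]]]. Qed.
Lemma ziE (i : 'I_3) : nat_of_ord (zi i) = (2 * i + 1)%N.
Proof. by rewrite /zi inordK //; case: i => [[|[|[|]]]]. Qed.
Lemma oth1E (k : 'I_3) : nat_of_ord (oth1 k) = ((k + 1) %% 3)%N.
Proof. by rewrite /oth1 inordK // ltn_mod. Qed.
Lemma oth2E (k : 'I_3) : nat_of_ord (oth2 k) = ((k + 2) %% 3)%N.
Proof. by rewrite /oth2 inordK // ltn_mod. Qed.

Definition cw (w : 'rV[R]_6) (n : nat) := w 0 (inord n).
Lemma wE (w : 'rV[R]_6) (a : 'I_6) : w 0 a = cw w a.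
Proof. by rewrite /cw inord_val. Qed.

Definition cw' (w : 'rV[R]_6) (n : nat) := cw w n.
Ltac normcw := repeat match goal with |- context [cw ?w ?n] =>
   let m := eval vm_compute in n in change (cw w n) with (cw' w m) end;
   rewrite /cw'.

Ltac idx := rewrite /dX /dZ /liftQ /projQ /xc /zc !mxE !wE ?xiE ?ziE ?oth1E ?oth2E.

Lemma inv_dX k (w : 'rV[R]_6) : dX k (liftQ (projQ w)) = dX k w.
Proof.
idx; case: k => [[|[|[|//]]] Hk] /=; rewrite ?inordK //=; normcw; ring.
Qed.
Lemma inv_dZ k (w : 'rV[R]_6) : dZ k (liftQ (projQ w)) = dZ k w.
Proof.
idx; case: k => [[|[|[|//]]] Hk] /=; rewrite ?inordK //=; normcw; ring.
Qed.
Lemma inv_zc i (w : 'rV[R]_6) : zc (liftQ (projQ w)) i = zc w i.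
Proof.
idx; case: i => [[|[|[|//]]] Hk] /=; rewrite ?inordK //=; normcw; ring.
Qed.

Lemma liftQ_lin (a : R) (y1 y2 : 'rV[R]_5) :
  liftQ (a *: y1 + y2) = a *: liftQ y1 + liftQ y2.
Proof.
apply/rowP => c; rewrite !mxE.
case: c => [[|[|[|[|[|[|//]]]]]] Hc] /=; rewrite ?mxE; ring.
Qed.

Lemma projQ_lin (a : R) (y1 y2 : 'rV[R]_6) :
  projQ (a *: y1 + y2) = a *: projQ y1 + projQ y2.
Proof.
apply/rowP => c; rewrite !mxE.
case: c => [[|[|[|[|[|//]]]]] Hc] /=; rewrite /xc /zc ?mxE; ring.
Qed.

Lemma oth12 k : oth1 k != oth2 k.
Proof.
apply/negP => /eqP/(congr1 (@nat_of_ord 3)); rewrite oth1E oth2E.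
by case: k => [[|[|[|//]]] Hk].
Qed.

End Idx.


Section Model.
Variable R : realType.
Variables (ks kn nus nuns nudb : R) (lbar : 'I_3 -> R) (chi : R -> R).

Definition Sq k (q : 'rV[R]_6) := dX k q * dX k q + dZ k q * dZ k q.
Definition Nk k (q w : 'rV[R]_6) := dX k q * dX k w + dZ k q * dZ k w.
Definition Dl k q w := Nk k q w / len q k.
Definition chi1 := derive1 chi.
Definition chi2 := derive1 chi1.
Definition good (q : 'rV[R]_6) := forall k, 0 < Sq k q.

Lemma lenE q k : len q k = Num.sqrt (Sq k q).
Proof. by rewrite /len /Sq !expr2. Qed.

Lemma isd_xc q i : is_diff q (fun p : 'rV[R]_6 => xc p i) (fun w => xc w i).
Proof. exact: isd_coord. Qed.
Lemma isd_zc q i : is_diff q (fun p : 'rV[R]_6 => zc p i) (fun w => zc w i).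
Proof. exact: isd_coord. Qed.
Lemma isd_dX (q : 'rV[R]_6) k : is_diff q (dX k) (dX k).
Proof. exact: isdB (isd_xc _ _) (isd_xc _ _). Qed.
Lemma isd_dZ (q : 'rV[R]_6) k : is_diff q (dZ k) (dZ k).
Proof. exact: isdB (isd_zc _ _) (isd_zc _ _). Qed.
Lemma isd_Sq q k : is_diff q (Sq k) (fun w => 2 * Nk k q w).
Proof.
apply: is_diff_eq.
  exact: isdD (isdM (isd_dX _ _) (isd_dX _ _)) (isdM (isd_dZ _ _) (isd_dZ _ _)).
by apply/funext => w; rewrite /Nk; ring.
Qed.


Lemma sqrt_der (x : R) : 0 < x ->
  derivable (@Num.sqrt R) x 1 /\ derive1 (@Num.sqrt R) x = (2 * Num.sqrt x)^-1.
Proof.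
move=> x0; have H := is_derive1_sqrt x0.
split; first exact: ex_derive.
by rewrite derive1E derive_val.
Qed.

Lemma len_pos q k : good q -> 0 < len q k.
Proof. by move=> g; rewrite lenE sqrtr_gt0. Qed.

Lemma isd_len q k : good q -> is_diff q (fun p => len p k) (Dl k q).
Proof.
move=> g.
have [d1 d2] := sqrt_der (g k).
have H := isd_comp1 (isd_Sq q k) d1.
have -> : (fun p => len p k) = (fun p => Num.sqrt (Sq k p)).
  by apply/funext => p; rewrite lenE.
apply: is_diff_eq H _.
apply/funext => w; rewrite d2 /Dl lenE.
have : Num.sqrt (Sq k q) != 0 by rewrite -lenE gt_eqF // len_pos.
move=> ?; field; done.
Qed.


Hypothesis hchi : forall (n : nat) (s : R), derivable (derive1n n chi) s 1.

Lemma isd_chi q i : is_diff q (fun p => chi (zc p i)) (fun w => chi1 (zc q i) * zc w i).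
Proof. have H := isd_comp1 (isd_zc q i) (@hchi 0%N (zc q i)). exact: H. Qed.

Lemma isd_chi1 q i : is_diff q (fun p => chi1 (zc p i)) (fun w => chi2 (zc q i) * zc w i).
Proof. exact: isd_comp1 (isd_zc q i) (@hchi 1%N _). Qed.

Lemma isd_linv q k : good q ->
  is_diff q (fun p => (len p k)^-1) (fun w => - (len q k)^-2 * Dl k q w).
Proof. by move=> g; apply: isdV (isd_len k g) _; rewrite gt_eqF // len_pos. Qed.

Lemma isd_Nk q k w : is_diff q (fun p => Nk k p w) (fun u => Nk k u w).
Proof.
apply: is_diff_eq.
  exact: isdD (isdM (isd_dX _ _) (isdcst _ _)) (isdM (isd_dZ _ _) (isdcst _ _)).
by apply/funext => u; rewrite /Nk; ring.
Qed.

Definition D2l k q u w := Nk k u w / len q k - Nk k q u * Nk k q w / len q k ^+ 3.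

Lemma isd_Dl q k w : good q -> is_diff q (fun p => Dl k p w) (fun u => D2l k q u w).
Proof.
move=> g; apply: is_diff_eq.
  exact: isdM (isd_Nk q k w) (isd_linv k g).
apply/funext => u; rewrite /D2l /Dl.
have : len q k != 0 by rewrite gt_eqF // len_pos.
move=> ?; field; done.
Qed.


Definition Gf q w := ks * \sum_(k < 3) (len q k - lbar k) * Dl k q w
  + kn * \sum_(i < 3) chi1 (zc q i) * zc w i + \sum_(i < 3) zc w i.
Definition Hf q u w := ks * \sum_(k < 3) (Dl k q u * Dl k q w + (len q k - lbar k) * D2l k q u w)
  + kn * \sum_(i < 3) chi2 (zc q i) * zc u i * zc w i.

Lemma isd_G q w : good q -> is_diff q (fun p => Gf p w) (fun u => Hf q u w).
Proof.
move=> g.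
have S1 : forall k, is_diff q (fun p => (len p k - lbar k) * Dl k p w)
   (fun u => Dl k q u * Dl k q w + (len q k - lbar k) * D2l k q u w).
  move=> k; apply: is_diff_eq.
    exact: isdM (isdB (isd_len k g) (isdcst _ _)) (isd_Dl k w g).
  by apply/funext => u; ring.
have S2 : forall i, is_diff q (fun p => chi1 (zc p i) * zc w i)
   (fun u => chi2 (zc q i) * zc u i * zc w i).
  move=> i; apply: is_diff_eq.
    exact: isdM (isd_chi1 q i) (isdcst _ _).
  by apply/funext => u; ring.
rewrite /Gf; apply: is_diff_eq.
  exact: isdD (isdD (isdM (isdcst _ _) (isdsum S1)) (isdM (isdcst _ _) (isdsum S2))) (isdcst _ _).
by apply/funext => u; rewrite /Hf; ring.
Qed.

Lemma isd_U q : good q -> is_diff q (Upot ks kn lbar chi) (Gf q).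
Proof.
move=> g.
have S1 : forall k, is_diff q (fun p => (len p k - lbar k) ^+ 2)
   (fun u => 2 * ((len q k - lbar k) * Dl k q u)).
  move=> k; apply: (@isd_ext _ _ _ _ (fun p => (len p k - lbar k) * (len p k - lbar k))).
    by move=> y; rewrite expr2.
  apply: is_diff_eq.
    exact: isdM (isdB (isd_len k g) (isdcst _ _)) (isdB (isd_len k g) (isdcst _ _)).
  by apply/funext => u; ring.
have E : forall u, \sum_(k < 3) 2 * ((len q k - lbar k) * Dl k q u) =
   2 * \sum_(k < 3) (len q k - lbar k) * Dl k q u.
  by move=> u; rewrite mulr_sumr.
rewrite /Upot; apply: is_diff_eq.
  exact: isdD (isdD (isdM (isdcst _ _) (isdsum S1)) (isdM (isdcst _ _) (isdsum (fun i => isd_chi q i)))) (isdsum (fun i => isd_zc q i)).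
apply/funext => u; rewrite /Gf E.
by field.
Qed.


Definition Rf q v := nus / 2 * \sum_(k < 3) (Dl k q v) ^+ 2
  - nuns / 2 * \sum_(i < 3) chi1 (zc q i) * xc v i ^+ 2
  + nudb / 2 * \sum_(i < 3) chi (zc q i) * zc v i ^+ 2.
Definition Cf q v w := nus * \sum_(k < 3) Dl k q v * Dl k q w
  - nuns * \sum_(i < 3) chi1 (zc q i) * xc v i * xc w i
  + nudb * \sum_(i < 3) chi (zc q i) * zc v i * zc w i.

Lemma Rayleigh_good q : good q -> Rayleigh nus nuns nudb chi q = Rf q.
Proof.
move=> g; apply/funext => v; rewrite /Rayleigh /Rf.
congr (_ * _ - _ + _); apply: eq_bigr => k _.
by rewrite (isd_derive _ (isd_len k g)).
Qed.

Lemma isd_Nk2 q k v : is_diff v (fun p => Nk k q p) (fun w => Nk k q w).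
Proof.
apply: is_diff_eq.
  exact: isdD (isdM (isdcst _ _) (isd_dX _ _)) (isdM (isdcst _ _) (isd_dZ _ _)).
by apply/funext => u; rewrite /Nk; ring.
Qed.

Lemma isd_Dl2 q k v : is_diff v (fun p => Dl k q p) (fun w => Dl k q w).
Proof.
apply: is_diff_eq.
  exact: isdM (isd_Nk2 q k v) (isdcst _ _).
by apply/funext => u; rewrite /Dl; ring.
Qed.

Lemma isd_R q v : is_diff v (Rf q) (Cf q v).
Proof.
have S1 : forall k, is_diff v (fun p => (Dl k q p) ^+ 2) (fun w => 2 * (Dl k q v * Dl k q w)).
  move=> k; apply: (@isd_ext _ _ _ _ (fun p => Dl k q p * Dl k q p)).
    by move=> y; rewrite expr2.
  apply: is_diff_eq; first exact: isdM (isd_Dl2 q k v) (isd_Dl2 q k v).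
  by apply/funext => u; ring.
have S2 : forall i, is_diff v (fun p => chi1 (zc q i) * xc p i ^+ 2)
    (fun w => 2 * (chi1 (zc q i) * xc v i * xc w i)).
  move=> i; apply: (@isd_ext _ _ _ _ (fun p => chi1 (zc q i) * (xc p i * xc p i))).
    by move=> y; rewrite expr2.
  apply: is_diff_eq; first exact: isdM (isdcst _ _) (isdM (isd_xc v i) (isd_xc v i)).
  by apply/funext => u; ring.
have S3 : forall i, is_diff v (fun p => chi (zc q i) * zc p i ^+ 2)
    (fun w => 2 * (chi (zc q i) * zc v i * zc w i)).
  move=> i; apply: (@isd_ext _ _ _ _ (fun p => chi (zc q i) * (zc p i * zc p i))).
    by move=> y; rewrite expr2.
  apply: is_diff_eq; first exact: isdM (isdcst _ _) (isdM (isd_zc v i) (isd_zc v i)).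
  by apply/funext => u; ring.
rewrite /Rf; apply: is_diff_eq.
  exact: isdD (isdB (isdM (isdcst _ _) (isdsum S1)) (isdM (isdcst _ _) (isdsum S2)))
              (isdM (isdcst _ _) (isdsum S3)).
apply/funext => w; rewrite /Cf -!mulr_sumr.
by field.
Qed.

Lemma Fdiss_good q v : good q ->
  Fdiss nus nuns nudb chi q v = \row_a - Cf q v (ebasis a).
Proof.
move=> g; apply/rowP => a; rewrite !mxE (Rayleigh_good g).
by rewrite (isd_derive _ (isd_R q v)).
Qed.

Lemma dU_good q : good q -> dU ks kn lbar chi q = \row_a Gf q (ebasis a).
Proof.
move=> g; apply/rowP => a; rewrite !mxE.
by rewrite (isd_derive _ (isd_U g)).
Qed.


Section Lin.
Variables (a : R) (w1 w2 : 'rV[R]_6).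
Lemma xcL i : xc (a *: w1 + w2) i = a * xc w1 i + xc w2 i.
Proof. by rewrite /xc !mxE. Qed.
Lemma zcL i : zc (a *: w1 + w2) i = a * zc w1 i + zc w2 i.
Proof. by rewrite /zc !mxE. Qed.
Lemma dXL k : dX k (a *: w1 + w2) = a * dX k w1 + dX k w2.
Proof. rewrite /dX !xcL; ring. Qed.
Lemma dZL k : dZ k (a *: w1 + w2) = a * dZ k w1 + dZ k w2.
Proof. rewrite /dZ !zcL; ring. Qed.
Lemma NkL k q : Nk k q (a *: w1 + w2) = a * Nk k q w1 + Nk k q w2.
Proof. rewrite /Nk dXL dZL; ring. Qed.
Lemma DlL k q : Dl k q (a *: w1 + w2) = a * Dl k q w1 + Dl k q w2.
Proof. rewrite /Dl NkL; ring. Qed.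
Lemma D2lL k q u : D2l k q u (a *: w1 + w2) = a * D2l k q u w1 + D2l k q u w2.
Proof. rewrite /D2l !NkL; ring. Qed.
End Lin.

Lemma NkC k (u w : 'rV[R]_6) : Nk k u w = Nk k w u.
Proof. rewrite /Nk; ring. Qed.

Lemma HfS q u w : Hf q u w = Hf q w u.
Proof.
rewrite /Hf; congr (_ * _ + _ * _); apply: eq_bigr => k _.
  (rewrite /D2l NkC; ring).
ring.
Qed.
Lemma CfS q v w : Cf q v w = Cf q w v.
Proof. rewrite /Cf; congr (_ * _ - _ * _ + _ * _); apply: eq_bigr => k _; ring. Qed.

Lemma Cf_Rf q v : Cf q v v = 2 * Rf q v.
Proof.
rewrite /Cf /Rf.
have -> : \sum_(k < 3) Dl k q v * Dl k q v = \sum_(k < 3) Dl k q v ^+ 2.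
  by apply: eq_bigr => k _; rewrite expr2.
have -> : \sum_(i < 3) chi1 (zc q i) * xc v i * xc v i = \sum_(i < 3) chi1 (zc q i) * xc v i ^+ 2.
  by apply: eq_bigr => k _; rewrite expr2 mulrA.
have -> : \sum_(i < 3) chi (zc q i) * zc v i * zc v i = \sum_(i < 3) chi (zc q i) * zc v i ^+ 2.
  by apply: eq_bigr => k _; rewrite expr2 mulrA.
by field.
Qed.

Lemma Gf_inv q w : Gf q (liftQ (projQ w)) = Gf q w.
Proof.
rewrite /Gf; congr (_ * _ + _ * _ + _); apply: eq_bigr => i _.
- by rewrite /Dl /Nk !inv_dX !inv_dZ.
- by rewrite inv_zc.
- by rewrite inv_zc.
Qed.

Lemma Hf_inv q u w : Hf q u (liftQ (projQ w)) = Hf q u w.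
Proof.
rewrite /Hf; congr (_ * _ + _ * _); apply: eq_bigr => i _.
  by rewrite /D2l /Dl /Nk !inv_dX !inv_dZ.
by rewrite inv_zc.
Qed.

Lemma GfL q : lin (Gf q).
Proof.
apply: lin_add; first apply: lin_add.
- apply: lin_cmul; apply: lin_sum => k a w1 w2; rewrite DlL; ring.
- apply: lin_cmul; apply: lin_sum => k a w1 w2; rewrite zcL; ring.
- apply: lin_sum => k a w1 w2; rewrite zcL; ring.
Qed.
Lemma HfL q u : lin (Hf q u).
Proof.
apply: lin_add; apply: lin_cmul; apply: lin_sum => k a w1 w2.
  rewrite DlL D2lL; ring.
rewrite zcL; ring.
Qed.
Lemma CfL q v : lin (Cf q v).
Proof.
apply: lin_add; first apply: lin_sub.
- apply: lin_cmul; apply: lin_sum => k a w1 w2; rewrite DlL; ring.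
- apply: lin_cmul; apply: lin_sum => k a w1 w2; rewrite xcL; ring.
- apply: lin_cmul; apply: lin_sum => k a w1 w2; rewrite zcL; ring.
Qed.

Lemma isd_liftQ (y : 'rV[R]_5) : is_diff y (@liftQ R) (@liftQ R).
Proof.
have H : forall j, is_diff y (fun z => liftQ z 0 j) (fun v => liftQ v 0 j).
{ move=> j; rewrite /liftQ.
  apply: (@isd_ext _ _ _ _ (fun z : 'rV[R]_5 =>
    [:: 0; z 0 (inord 2); z 0 (inord 0); z 0 (inord 3); z 0 (inord 1); z 0 (inord 4)]`_j)).
    by move=> z; rewrite mxE.
  apply: is_diff_eq; last first.
    apply/funext => v; rewrite mxE; reflexivity.
  case: j => [[|[|[|[|[|[|//]]]]]] Hj] /=; first exact: isdcst.
  all: exact: isd_coord. }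
apply: is_diff_eq; first exact: is_diff_row H.
by apply/funext => v; apply/rowP => j; rewrite mxE.
Qed.

Lemma isd_projQ (w : 'rV[R]_6) : is_diff w (@projQ R) (@projQ R).
Proof.
have H : forall j, is_diff w (fun z => projQ z 0 j) (fun v => projQ v 0 j).
{ move=> j; rewrite /projQ.
  apply: (@isd_ext _ _ _ _ (fun z : 'rV[R]_6 =>
    [:: xc z 1 - xc z 0; xc z 2%:R - xc z 0; zc z 0; zc z 1; zc z 2%:R]`_j)).
    by move=> z; rewrite mxE.
  apply: is_diff_eq; last first.
    apply/funext => v; rewrite mxE; reflexivity.
  case: j => [[|[|[|[|[|//]]]]] Hj] /=.
  - exact: isdB (isd_xc _ _) (isd_xc _ _).
  - exact: isdB (isd_xc _ _) (isd_xc _ _).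
  all: exact: isd_zc. }
apply: is_diff_eq; first exact: is_diff_row H.
by apply/funext => v; apply/rowP => j; rewrite mxE.
Qed.

Lemma isd_lsub (X : 'rV[R]_(5 + 6)) : is_diff X (@lsubmx R 1 5 6) (@lsubmx R 1 5 6).
Proof.
apply: DiffDef; first exact: differentiable_lsubmx.
by rewrite diff_lin //; exact: continuous_lsubmx.
Qed.
Lemma isd_rsub (X : 'rV[R]_(5 + 6)) : is_diff X (@rsubmx R 1 5 6) (@rsubmx R 1 5 6).
Proof.
apply: DiffDef; first exact: differentiable_rsubmx.
by rewrite diff_lin //; exact: continuous_rsubmx.
Qed.

Lemma good_near (V : normedModType R) (phi dphi : V -> 'rV[R]_6) x :
  is_diff x phi dphi -> good (phi x) -> \forall y \near x, good (phi y).
Proof.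
move=> hphi gx; rewrite /good; apply: filter_forall => k.
have hS := isd_comp hphi (isd_Sq (phi x) k).
have /differentiable_continuous hc : differentiable (fun y => Sq k (phi y)) x by case: hS.
exact: (cvgr_gt _ hc 0 (gx k)).
Qed.

Lemma pos_sq (x : R) : x != 0 -> 0 < x * x.
Proof. by move=> x0; rewrite -expr2 lt0r sqrf_eq0 x0 sqr_ge0. Qed.

Lemma good_inQ q : inQ q -> good q.
Proof.
move=> Hq k; have := Hq _ _ (oth12 k); rewrite xpair_eqE negb_and => /orP[] H.
  have : dX k q != 0 by rewrite /dX subr_eq0.
  move/pos_sq => h; rewrite /Sq; have := sqr_ge0 (dZ k q); rewrite expr2 => h2.
  exact: ltr_wpDr.
have : dZ k q != 0 by rewrite /dZ subr_eq0.
move/pos_sq => h; rewrite /Sq; have := sqr_ge0 (dX k q); rewrite expr2 => h2.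
exact: ltr_wpDl.
Qed.

Lemma lin_liftQ (f : 'rV[R]_6 -> R) : lin f -> lin (fun y : 'rV[R]_5 => f (liftQ y)).
Proof. by move=> hf a y1 y2; rewrite liftQ_lin hf. Qed.

Lemma lin0 n (f : 'rV[R]_n -> R) : lin f -> f 0 = 0.
Proof. by move=> hf; rewrite [f 0]lin_basis // big1 // => a _; rewrite mxE mul0r. Qed.

Lemma D_Uhat y v : good (liftQ y) ->
  'D_v (Uhat ks kn lbar chi) y = Gf (liftQ y) (liftQ v).
Proof.
move=> g; rewrite /Uhat (@DLcomp _ _ _ _ (@liftQ R) (Upot ks kn lbar chi)).
  exact: isd_derive (isd_U g).
by move=> h v' x'; rewrite liftQ_lin.
Qed.

Section Star.
Variable ystar : 'rV[R]_5.
Hypothesis gstar : good (liftQ ystar).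
Local Notation qs := (liftQ ystar).

Lemma hess_entry i j :
  hessian (Uhat ks kn lbar chi) ystar i j = Hf qs (liftQ (ebasis i)) (liftQ (ebasis j)).
Proof.
rewrite /hessian mxE.
rewrite (@near_eq_derive _ _ _ _ (fun y => Gf (liftQ y) (liftQ (ebasis j)))).
  rewrite (@DLcomp _ _ _ _ (@liftQ R) (fun q => Gf q (liftQ (ebasis j)))).
    exact: isd_derive (isd_G _ gstar).
  by move=> h v' x'; rewrite liftQ_lin.
have := good_near (isd_liftQ ystar) gstar.
by apply: filterS => y gy; rewrite D_Uhat.
Qed.

Lemma Gstar0 : (forall b : 'I_5, 'D_(ebasis b) (Uhat ks kn lbar chi) ystar = 0) ->
  forall w, Gf qs w = 0.
Proof.
move=> h0 w; rewrite -Gf_inv.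
rewrite (lin_basis (projQ w) (lin_liftQ (GfL qs))) big1 // => b _.
by rewrite -D_Uhat // h0 mulr0.
Qed.

Lemma Hpos : posdef_mx (hessian (Uhat ks kn lbar chi) ystar) ->
  forall y, y != 0 -> 0 < Hf qs (liftQ y) (liftQ y).
Proof.
move=> hp y y0; have := hp y y0.
suff -> : (y *m hessian (Uhat ks kn lbar chi) ystar *m y^T) 0 0 =
    Hf qs (liftQ y) (liftQ y) by [].
rewrite mxE (lin_basis y (lin_liftQ (HfL qs (liftQ y)))).
apply: eq_bigr => j _; rewrite !mxE HfS.
rewrite (lin_basis y (lin_liftQ (HfL qs (liftQ (ebasis j))))) mulrC.
congr (_ * _); apply: eq_bigr => i _; by rewrite hess_entry HfS.
Qed.

Lemma Hnneg : posdef_mx (hessian (Uhat ks kn lbar chi) ystar) ->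
  forall y, 0 <= Hf qs (liftQ y) (liftQ y).
Proof.
move=> hp y; have [->|y0] := eqVneq y 0; last exact/ltW/Hpos.
by rewrite (lin0 (lin_liftQ (HfL qs (liftQ 0)))).
Qed.

Lemma Cpos : (forall v : 'rV[R]_6, v != 0 -> 0 < Rayleigh nus nuns nudb chi qs v) ->
  forall v, v != 0 -> 0 < Cf qs v v.
Proof.
move=> hr v v0; rewrite Cf_Rf -(Rayleigh_good gstar).
by rewrite mulr_gt0 // hr.
Qed.

Lemma Cnneg : (forall v : 'rV[R]_6, v != 0 -> 0 < Rayleigh nus nuns nudb chi qs v) ->
  forall v, 0 <= Cf qs v v.
Proof.
move=> hr v; have [->|v0] := eqVneq v 0; last exact/ltW/Cpos.
by rewrite (lin0 (CfL qs 0)).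
Qed.

Local Notation Xs := (row_mx ystar (0 : 'rV[R]_6)).
Definition phi (X : 'rV[R]_(5 + 6)) := liftQ (lsubmx X).
Lemma isd_phi X : is_diff X phi (fun v => liftQ (lsubmx v)).
Proof. exact: isd_comp (isd_lsub X) (isd_liftQ _). Qed.
Lemma phiXs : phi Xs = qs.
Proof. by rewrite /phi row_mxKl. Qed.
Lemma rsubXs : rsubmx Xs = 0.
Proof. by rewrite row_mxKr. Qed.

Lemma xc0 i : xc (0 : 'rV[R]_6) i = 0. Proof. by rewrite /xc mxE. Qed.
Lemma zc0 i : zc (0 : 'rV[R]_6) i = 0. Proof. by rewrite /zc mxE. Qed.
Lemma dX0 k : dX k (0 : 'rV[R]_6) = 0. Proof. by rewrite /dX !xc0 subr0. Qed.
Lemma dZ0 k : dZ k (0 : 'rV[R]_6) = 0. Proof. by rewrite /dZ !zc0 subr0. Qed.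

Lemma isd_Dlv k : is_diff Xs (fun X => Dl k (phi X) (rsubmx X)) (fun v => Dl k qs (rsubmx v)).
Proof.
have hN : is_diff Xs (fun X => Nk k (phi X) (rsubmx X)) (fun v => Nk k qs (rsubmx v)).
  have h1 := isdM0 (isd_comp (isd_phi Xs) (isd_dX _ k)) (isd_comp (isd_rsub Xs) (isd_dX _ k)).
  have h2 := isdM0 (isd_comp (isd_phi Xs) (isd_dZ _ k)) (isd_comp (isd_rsub Xs) (isd_dZ _ k)).
  rewrite rsubXs in h1 h2.
  have := isdD (h1 (dX0 k)) (h2 (dZ0 k)).
  by rewrite phiXs.
have hl : is_diff Xs (fun X => (len (phi X) k)^-1) (fun v => - (len qs k)^-2 * Dl k qs (liftQ (lsubmx v))).
  exact: isd_comp' (isd_phi Xs) phiXs (isd_linv k gstar).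
have := isdM0' hl hN.
rewrite rsubXs /Nk dX0 dZ0 !mulr0 addr0 => /(_ erefl).
by rewrite phiXs.
Qed.

Lemma isd_Cf w : is_diff Xs (fun X => Cf (phi X) (rsubmx X) w) (fun v => Cf qs (rsubmx v) w).
Proof.
have S1 : forall k, is_diff Xs (fun X => Dl k (phi X) (rsubmx X) * Dl k (phi X) w)
    (fun v => Dl k qs (rsubmx v) * Dl k qs w).
  move=> k.
  have ha := isd_comp' (isd_phi Xs) phiXs (isd_Dl k w gstar).
  have := isdM0' ha (isd_Dlv k).
  rewrite rsubXs /Dl /Nk dX0 dZ0 !mulr0 addr0 mul0r => /(_ erefl).
  by rewrite phiXs.
have S2 : forall i, is_diff Xs (fun X => chi1 (zc (phi X) i) * xc (rsubmx X) i * xc w i)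
    (fun v => chi1 (zc qs i) * xc (rsubmx v) i * xc w i).
  move=> i.
  have ha := isd_comp' (isd_phi Xs) phiXs (isd_chi1 qs i).
  have hb := isd_comp (isd_rsub Xs) (isd_xc _ i).
  have := isdM0 ha hb; rewrite rsubXs xc0 => /(_ erefl) h.
  have := isdM h (isdcst (xc w i) Xs).
  move=> h2; apply: (is_diff_eq h2); apply/funext => v; rewrite /= phiXs; ring.
have S3 : forall i, is_diff Xs (fun X => chi (zc (phi X) i) * zc (rsubmx X) i * zc w i)
    (fun v => chi (zc qs i) * zc (rsubmx v) i * zc w i).
  move=> i.
  have ha := isd_comp' (isd_phi Xs) phiXs (isd_chi qs i).
  have hb := isd_comp (isd_rsub Xs) (isd_zc _ i).
  have := isdM0 ha hb; rewrite rsubXs zc0 => /(_ erefl) h.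
  have := isdM h (isdcst (zc w i) Xs).
  move=> h2; apply: (is_diff_eq h2); apply/funext => v; rewrite /= phiXs; ring.
have H := isdD (isdB (isdM (isdcst nus Xs) (isdsum S1)) (isdM (isdcst nuns Xs) (isdsum S2)))
              (isdM (isdcst nudb Xs) (isdsum S3)).
eapply is_diff_eq; first exact H.
by apply/funext => v /=; rewrite /Cf; ring.
Qed.

Definition Fs (X : 'rV[R]_(5 + 6)) : 'rV[R]_(5 + 6) :=
  row_mx (projQ (rsubmx X))
    (\row_a (- Cf (phi X) (rsubmx X) (ebasis a) - Gf (phi X) (ebasis a))).
Definition DF (v : 'rV[R]_(5 + 6)) : 'rV[R]_(5 + 6) :=
  row_mx (projQ (rsubmx v))
    (\row_a (- Cf qs (rsubmx v) (ebasis a) - Hf qs (liftQ (lsubmx v)) (ebasis a))).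

Lemma fred_near : \forall X \near Xs, fred ks kn nus nuns nudb lbar chi X = Fs X.
Proof.
have := good_near (isd_phi Xs) (eq_ind_r good gstar phiXs).
apply: filterS => X gX; rewrite /fred /Fs /=; congr row_mx.
  by apply: derive_aff => h; rewrite projQ_lin.
rewrite Fdiss_good // dU_good //; apply/rowP => a; rewrite !mxE.
by [].
Qed.

Lemma isd_Fs : is_diff Xs Fs DF.
Proof.
have H : forall j, is_diff Xs (fun X => Fs X 0 j) (fun v => DF v 0 j).
  move=> j; case: (splitP j) => j' hj.
    have -> : j = lshift 6 j' by apply/val_inj.
    apply: (@isd_ext _ _ _ _ (fun X => projQ (rsubmx X) 0 j')).
      by move=> X; rewrite /Fs row_mxEl.
    eapply is_diff_eq; first exact: isd_entry (isd_comp (isd_rsub Xs) (isd_projQ _)).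
    by apply/funext => v; rewrite /DF row_mxEl.
  have -> : j = rshift 5 j' by apply/val_inj.
  apply: (@isd_ext _ _ _ _ (fun X => - Cf (phi X) (rsubmx X) (ebasis j') - Gf (phi X) (ebasis j'))).
    by move=> X; rewrite /Fs row_mxEr mxE.
  eapply is_diff_eq.
    exact: isdB (isdN (isd_Cf (ebasis j'))) (isd_comp' (isd_phi Xs) phiXs (isd_G (ebasis j') gstar)).
  by apply/funext => v; rewrite /DF row_mxEr mxE.
eapply is_diff_eq; first exact: is_diff_row H.
by apply/funext => v; apply/rowP => j; rewrite mxE.
Qed.

Lemma ReD (x y : R[i]) : complex.Re (x + y) = complex.Re x + complex.Re y.
Proof. by case: x; case: y. Qed.
Lemma ImD (x y : R[i]) : complex.Im (x + y) = complex.Im x + complex.Im y.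
Proof. by case: x; case: y. Qed.
Lemma ReMr (x : R[i]) (r : R) : complex.Re (x * (r%:C)%C) = complex.Re x * r.
Proof. case: x => a b /=. ring. Qed.
Lemma ImMr (x : R[i]) (r : R) : complex.Im (x * (r%:C)%C) = complex.Im x * r.
Proof. case: x => a b /=. ring. Qed.
Lemma ReM (x y : R[i]) : complex.Re (x * y) = complex.Re x * complex.Re y - complex.Im x * complex.Im y.
Proof. case: x => a b; case: y => c d /=. ring. Qed.
Lemma ImM (x y : R[i]) : complex.Im (x * y) = complex.Re x * complex.Im y + complex.Im x * complex.Re y.
Proof. case: x => a b; case: y => c d /=. ring. Qed.
Lemma Re_sum n (F : 'I_n -> R[i]) : complex.Re (\sum_(i < n) F i) = \sum_(i < n) complex.Re (F i).
Proof. by elim/big_rec2: _ => // i y1 y2 _ <-; rewrite ReD. Qed.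
Lemma Im_sum n (F : 'I_n -> R[i]) : complex.Im (\sum_(i < n) F i) = \sum_(i < n) complex.Im (F i).
Proof. by elim/big_rec2: _ => // i y1 y2 _ <-; rewrite ImD. Qed.

Lemma CfS0 w : Cf qs 0 w = 0.
Proof. by rewrite CfS (lin0 (CfL qs w)). Qed.

Lemma eig_neg (hp : posdef_mx (hessian (Uhat ks kn lbar chi) ystar))
  (hr : forall v : 'rV[R]_6, v != 0 -> 0 < Rayleigh nus nuns nudb chi qs v)
  (L : {linear 'rV[R]_(5 + 6) -> 'rV[R]_(5 + 6)}) (hL : forall v, L v = DF v)
  (lam : R[i]) :
  eigenvalue (map_mx (fun r : R => (r%:C)%C) (lin1_mx L)) lam -> complex.Re lam < 0.
Proof.
move=> /eigenvalueP [u hu u0].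
set al := complex.Re lam; set be := complex.Im lam.
pose vr := \row_j complex.Re (u 0 j); pose vi := \row_j complex.Im (u 0 j).
have Er : DF vr = al *: vr - be *: vi.
  rewrite -hL -(mul_rV_lin1 L); apply/rowP => j.
  have := congr1 (fun M : 'rV[R[i]]_(5 + 6) => complex.Re (M 0 j)) hu; rewrite /= !mxE Re_sum ReM => <-.
  by apply: eq_bigr => i _; rewrite !mxE ReMr.
have Ei : DF vi = be *: vr + al *: vi.
  rewrite -hL -(mul_rV_lin1 L); apply/rowP => j.
  have := congr1 (fun M : 'rV[R[i]]_(5 + 6) => complex.Im (M 0 j)) hu; rewrite /= !mxE Im_sum ImM => E.
  rewrite (_ : be * _ + al * _ = al * complex.Im (u 0 j) + be * complex.Re (u 0 j)); last by ring.
  rewrite -E; apply: eq_bigr => i _; rewrite !mxE ImMr.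
  by [].
have Lr : projQ (rsubmx vr) = al *: lsubmx vr - be *: lsubmx vi.
  by have := congr1 lsubmx Er; rewrite /DF row_mxKl linearB !linearZ.
have Li : projQ (rsubmx vi) = be *: lsubmx vr + al *: lsubmx vi.
  by have := congr1 lsubmx Ei; rewrite /DF row_mxKl linearD !linearZ.
have Rr : forall a, - Cf qs (rsubmx vr) (ebasis a) - Hf qs (liftQ (lsubmx vr)) (ebasis a)
    = al * rsubmx vr 0 a - be * rsubmx vi 0 a.
  move=> a; have E := congr1 (fun M : 'rV[R]_6 => M 0 a) (congr1 rsubmx Er).
  rewrite /= /DF row_mxKr mxE in E; rewrite E.
  by rewrite !mxE.
have Ri : forall a, - Cf qs (rsubmx vi) (ebasis a) - Hf qs (liftQ (lsubmx vi)) (ebasis a)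
    = be * rsubmx vr 0 a + al * rsubmx vi 0 a.
  move=> a; have E := congr1 (fun M : 'rV[R]_6 => M 0 a) (congr1 rsubmx Ei).
  rewrite /= /DF row_mxKr mxE in E; rewrite E.
  by rewrite !mxE.
have Iden : forall (w : 'rV[R]_6) (y : 'rV[R]_5) (c : 'rV[R]_6 -> R),
    (forall a, - Cf qs w (ebasis a) - Hf qs (liftQ y) (ebasis a) = c (ebasis a)) ->
    lin c -> - Cf qs w w - Hf qs (liftQ y) w = c w.
  move=> w y c hc lc.
  rewrite (lin_basis w (CfL qs w)) (lin_basis w (HfL qs (liftQ y))) (lin_basis w lc).
  rewrite -sumrN -sumrB; apply: eq_bigr => a _; rewrite -hc; ring.
set va := rsubmx vr; set vb := rsubmx vi; set ya := lsubmx vr; set yb := lsubmx vi.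
have I1 : - Cf qs va va - Hf qs (liftQ ya) va = al * ip va va - be * ip vb va.
  apply: (Iden _ _ (fun z => al * ip va z - be * ip vb z)).
    by move=> a; rewrite !ip_e Rr.
  exact: lin_sub (lin_cmul _ (ip_lin _)) (lin_cmul _ (ip_lin _)).
have I2 : - Cf qs vb vb - Hf qs (liftQ yb) vb = be * ip va vb + al * ip vb vb.
  apply: (Iden _ _ (fun z => be * ip va z + al * ip vb z)).
    by move=> a; rewrite !ip_e Ri.
  exact: lin_add (lin_cmul _ (ip_lin _)) (lin_cmul _ (ip_lin _)).
have I3 : Hf qs (liftQ ya) va = al * Hf qs (liftQ ya) (liftQ ya) - be * Hf qs (liftQ ya) (liftQ yb).
  by rewrite -Hf_inv Lr (lin_lin2 _ _ _ _ (lin_liftQ (HfL qs (liftQ ya)))).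
have I4 : Hf qs (liftQ yb) vb = be * Hf qs (liftQ yb) (liftQ ya) + al * Hf qs (liftQ yb) (liftQ yb).
  by rewrite -Hf_inv Li (lin_lin2p _ _ _ _ (lin_liftQ (HfL qs (liftQ yb)))).
have S1 := HfS qs (liftQ ya) (liftQ yb).
have S2 := ipC va vb.
have key : al * (ip va va + ip vb vb + Hf qs (liftQ ya) (liftQ ya) + Hf qs (liftQ yb) (liftQ yb))
   = - (Cf qs va va + Cf qs vb vb).
  nra.
rewrite ltNge; apply/negP => al0.
have P0 : 0 <= ip va va + ip vb vb + Hf qs (liftQ ya) (liftQ ya) + Hf qs (liftQ yb) (liftQ yb).
  have := Hnneg hp ya; have := Hnneg hp yb; have := ip_ge0 va; have := ip_ge0 vb; lra.
have Ca0 := Cnneg hr va; have Cb0 := Cnneg hr vb.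
have CC : Cf qs va va + Cf qs vb vb <= 0.
  by have := mulr_ge0 al0 P0; rewrite key oppr_ge0.
have Ca : Cf qs va va = 0 by lra.
have Cb : Cf qs vb vb = 0 by lra.
have va0 : va = 0.
  by case: (eqVneq va 0) => // nz; have := Cpos hr nz; rewrite Ca ltxx.
have vb0 : vb = 0.
  by case: (eqVneq vb 0) => // nz; have := Cpos hr nz; rewrite Cb ltxx.
have Ha : forall a, Hf qs (liftQ ya) (ebasis a) = 0.
  move=> a; have := Rr a; rewrite -/va -/vb -/ya va0 vb0 CfS0 !mxE => E; lra.
have Hb : forall a, Hf qs (liftQ yb) (ebasis a) = 0.
  move=> a; have := Ri a; rewrite -/va -/vb -/yb va0 vb0 CfS0 !mxE => E; lra.
have ya0 : ya = 0.
  case: (eqVneq ya 0) => // nz; have := Hpos hp nz.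
  by rewrite (lin_basis (liftQ ya) (HfL qs (liftQ ya))) big1 ?ltxx // => a _; rewrite Ha mulr0.
have yb0 : yb = 0.
  case: (eqVneq yb 0) => // nz; have := Hpos hp nz.
  by rewrite (lin_basis (liftQ yb) (HfL qs (liftQ yb))) big1 ?ltxx // => a _; rewrite Hb mulr0.
have vr0 : vr = 0 by rewrite -(hsubmxK vr) -/va -/ya va0 ya0 row_mx0.
have vi0 : vi = 0 by rewrite -(hsubmxK vi) -/vb -/yb vb0 yb0 row_mx0.
move/eqP: u0; apply; apply/rowP => j.
have := congr1 (fun M : 'rV[R]_(5 + 6) => M 0 j) vr0.
have := congr1 (fun M : 'rV[R]_(5 + 6) => M 0 j) vi0.
rewrite /= !mxE; case: (u 0 j) => a b /= -> ->.
by [].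
Qed.

End Star.

End Model.

Unset Implicit Arguments.

Lemma projQ0 (R : realType) : projQ (0 : 'rV[R]_6) = 0.
Proof.
apply/rowP => b; rewrite !mxE /xc /zc.
case: b => [[|[|[|[|[|//]]]]] Hb] /=; rewrite !mxE ?subr0 //.
Qed.

Theorem proposition8 (R : realType) (ks kn nus nuns nudb : R) (lbar : 'I_3 -> R)
    (chi : R -> R) (ystar : 'rV[R]_5) :
  0 < ks -> 0 < kn -> 0 < nus -> 0 < nuns -> 0 < nudb -> (forall k, 0 < lbar k) ->
  smoothing_of_chi0 chi ->
  inQ (liftQ ystar) ->
  (forall b : 'I_5, 'D_(ebasis b) (Uhat ks kn lbar chi) ystar = 0) ->
  posdef_mx (hessian (Uhat ks kn lbar chi) ystar) ->
  (forall v : 'rV[R]_6, v != 0 -> 0 < Rayleigh nus nuns nudb chi (liftQ ystar) v) ->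
  robustly_stable (fred ks kn nus nuns nudb lbar chi) (row_mx ystar 0).
Proof.
move=> _ _ _ _ _ _ [hchi _] hQ h0 hp hr.
have gs := good_inQ hQ.
have Hn := fred_near ks kn nus nuns nudb lbar hchi gs.
have HF := near_eq_is_diff Hn (isd_Fs ks kn nus nuns nudb lbar hchi gs).
split; [|split].
- rewrite (nbhs_singleton Hn) /Fs phiXs rsubXs projQ0.
  rewrite (_ : \row_a _ = 0) ?row_mx0 //; apply/rowP => a.
  rewrite !mxE CfS0 // (Gstar0 hchi gs h0); lra.
- by case: HF.
- move=> lam; apply: (eig_neg hchi gs hp hr).
  by move=> v; rewrite diff_val.
Qed.
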